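(* Let $\tilde{\boldsymbol x}\in L^2(\Omega,\mathbb R^m)$, $\tilde{\boldsymbol y}\in L^2(\Omega,\mathbb R^n)$ be zero-mean, and let $\tilde{\boldsymbol v}_1=\tilde{\boldsymbol y},\tilde{\boldsymbol v}_2,\ldots,\tilde{\boldsymbol v}_p\in L^2(\Omega,\mathbb R^n)$ be zero-mean and pairwise orthogonal ($E[\tilde{\boldsymbol v}_i\tilde{\boldsymbol v}_j^T]=\mathbb O$ for $i\neq j$). Let $\eta_1,\ldots,\eta_p$ be nonnegative integers with $\sum\eta_k\le\min\{m,n\}$. For each $k$ let $\beta_{k1}\ge\beta_{k2}\ge\cdots\ge0$ be the singular values of $E_{\tilde x\tilde v_k}(E_{\tilde v_k\tilde v_k}^{1/2})^\dagger$ and $G_{k\eta_k}$ the rank-$\le\eta_k$ truncation of its SVD (keeping the $\eta_k$ largest singular values). Let $\mathcal T_p^*(\tilde{\boldsymbol y})=\sum_{k=1}^pG_{k\eta_k}(E_{\tilde v_k\tilde v_k}^{1/2})^\dagger\tilde{\boldsymbol v}_k$, and let the Karhunen–Loève transform of rank $\eta_1$ be $\mathcal T_{\rm KLT}(\tilde{\boldsymbol y})=G_{1\eta_1}(E_{\tilde y\tilde y}^{1/2})^\dagger\tilde{\boldsymbol y}$ (the case $p=1$). Then $$E\big[\|\tilde{\boldsymbol x}-\mathcal T_p^*(\tilde{\boldsymbol y})\|^2\big]=E\big[\|\tilde{\boldsymbol x}-\mathcal T_{\rm KLT}(\tilde{\boldsymbol y})\|^2\big]-\sum_{k=2}^p\sum_{j=1}^{\eta_k}\beta_{kj}^2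 .$$
   Context: $E[\cdot]$ denotes expectation on a probability space $(\Omega,\Sigma,\mu)$; $E_{gh}:=E[\boldsymbol g\boldsymbol h^T]$ for random vectors $\boldsymbol g,\boldsymbol h$. $M^\dagger$ is the Moore–Penrose pseudo-inverse and $M^{1/2}$ the symmetric PSD square root. For vectors $\|\cdot\|$ is the Euclidean norm, for matrices the Frobenius norm. Matrices act on random vectors pointwise in $\omega$. *)

(* Defs.v *)
From HB Require Import structures.
From mathcomp Require Import all_boot all_order all_algebra.
From mathcomp Require Import all_classical all_reals all_analysis.
Set Implicit Arguments. Unset Strict Implicit. Unset Printing Implicit Defensive.
Import Order.TTheory GRing.Theory Num.Theory.
Local Open Scope ring_scope.

Section Defs.
Context {d : measure_display} {T : measurableType d} {R : realType}.
Variable P : probability T R.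

Definition Ex (f : T -> R) : R := fine ('E_P[f])%E.

Definition L2vec n (f : T -> 'cV[R]_n) : Prop :=
  forall i : 'I_n, (fun w => f w i 0) \in Lfun P 2%:E.

Definition zero_mean n (f : T -> 'cV[R]_n) : Prop :=
  forall i : 'I_n, Ex (fun w => f w i 0) = 0.

Definition Emat m n (g : T -> 'cV[R]_m) (h : T -> 'cV[R]_n) : 'M[R]_(m, n) :=
  \matrix_(i, j) Ex (fun w => g w i 0 * h w j 0).

Definition mse m (x z : T -> 'cV[R]_m) : R :=
  Ex (fun w => \sum_(i < m) (x w i 0 - z w i 0) ^+ 2).
End Defs.

Section LinAlg.
Context {R : realType}.

Definition is_psd_sqrt n (S M : 'M[R]_n) : Prop :=
  S^T = S /\ (forall u : 'cV[R]_n, 0 <= (u^T *m S *m u) 0 0) /\ S *m S = M.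

Definition is_pinv m n (A : 'M[R]_(m, n)) (B : 'M[R]_(n, m)) : Prop :=
  A *m B *m A = A /\ B *m A *m B = B /\
  (A *m B)^T = A *m B /\ (B *m A)^T = B *m A.

Definition orthogonal_mx n (U : 'M[R]_n) : Prop := U^T *m U = 1%:M.

Definition rdiag m n (s : nat -> R) : 'M[R]_(m, n) :=
  \matrix_(i, j) if (i == j :> nat) then s (i : nat) else 0.

Definition is_svd m n (A : 'M[R]_(m, n)) (U : 'M[R]_m) (s : nat -> R)
    (V : 'M[R]_n) : Prop :=
  orthogonal_mx U /\ orthogonal_mx V /\
  (forall i, (i < minn m n)%N -> 0 <= s i) /\
  (forall i j, (i <= j)%N -> (j < minn m n)%N -> s j <= s i) /\
  A = U *m rdiag m n s *m V^T.

Definition svd_trunc m n (U : 'M[R]_m) (s : nat -> R) (V : 'M[R]_n)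
    (eta : nat) : 'M[R]_(m, n) :=
  U *m rdiag m n (fun i => if (i < eta)%N then s i else 0) *m V^T.
End LinAlg.

(* Main.v *)
Require Import Defs.
From HB Require Import structures.
From mathcomp Require Import all_boot all_order all_algebra.
From mathcomp Require Import all_classical all_reals all_analysis.
Import Order.TTheory GRing.Theory Num.Theory.
From mathcomp Require Import ring lra.
Import numFieldNormedType.Exports.
Local Open Scope ring_scope.

Section Analytic.
Context {d : measure_display} {T : measurableType d} {R : realType}.
Variable P : probability T R.

Let p2 : (1 <= (2%:E : \bar R))%E. Proof. by rewrite lee_fin ler1n. Qed.
Let p1 : (1 <= (1%:E : \bar R))%E. Proof. by rewrite lee_fin. Qed.

Lemma LpD (q : R) (f g : T -> R) : (1 <= q%:E)%E -> f \in Lfun P q%:E -> g \in Lfun P q%:E ->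
  (fun w => f w + g w) \in Lfun P q%:E.
Proof. move=> hq hf hg. exact: (@Lfun_addr_closed _ _ _ P _ hq).2. Qed.

Lemma LpN (q : R) (f : T -> R) : f \in Lfun P q%:E -> (fun w => - f w) \in Lfun P q%:E.
Proof. move=> hf. exact: (Lfun_oppr_closed hf). Qed.

Lemma Lp0 (q : R) : (1 <= q%:E)%E -> (fun w : T => 0 : R) \in Lfun P q%:E.
Proof. move=> hq; exact: (@Lfun_addr_closed _ _ _ P _ hq).1. Qed.

Lemma LpZ (q : R) (c : R) (f : T -> R) : (1 <= q%:E)%E -> f \in Lfun P q%:E ->
  (fun w => c * f w) \in Lfun P q%:E.
Proof.
move=> hq hf.
have -> : (fun w => c * f w) = c \o* f by apply/funext => w /=; rewrite mulrC.
by apply: Lfun_scale => //; rewrite -lee_fin.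
Qed.

Lemma Lpsum (q : R) (I : Type) (s : seq I) (F : I -> T -> R) : (1 <= q%:E)%E ->
  (forall i, F i \in Lfun P q%:E) -> (fun w => \sum_(i <- s) F i w) \in Lfun P q%:E.
Proof.
move=> hq hF; elim: s => [|a s IH].
  under eq_fun do rewrite big_nil. exact: Lp0.
under eq_fun do rewrite big_cons. exact: LpD.
Qed.

Lemma L2M (f g : T -> R) : f \in Lfun P 2%:E -> g \in Lfun P 2%:E ->
  (fun w => f w * g w) \in Lfun P 1%:E.
Proof. move=> hf hg; exact: Lfun2_mul_Lfun1. Qed.

Lemma Ex_fin (f : T -> R) : f \in Lfun P 1%:E -> ('E_P[f])%E \is a fin_num.
Proof. exact: expectation_fin_num. Qed.

Lemma ExD (f g : T -> R) : f \in Lfun P 1%:E -> g \in Lfun P 1%:E ->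
  Ex P (fun w => f w + g w) = Ex P f + Ex P g.
Proof.
move=> hf hg; rewrite /Ex.
have -> : ('E_P[(fun w => f w + g w)%R])%E = ('E_P[f \+ g])%E by [].
by rewrite expectationD // fineD // Ex_fin.
Qed.

Lemma ExN (f : T -> R) : f \in Lfun P 1%:E -> Ex P (fun w => - f w) = - Ex P f.
Proof.
move=> hf; rewrite /Ex.
have -> : (fun w => - f w) = (-1) \o* f by apply/funext => w /=; rewrite mulrN1.
by rewrite expectationZl // fineM ?Ex_fin // mulN1r.
Qed.

Lemma ExZ (c : R) (f : T -> R) : f \in Lfun P 1%:E -> Ex P (fun w => c * f w) = c * Ex P f.
Proof.
move=> hf; rewrite /Ex.
have -> : (fun w => c * f w) = c \o* f by apply/funext => w /=; rewrite mulrC.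
by rewrite expectationZl // fineM ?Ex_fin.
Qed.

Lemma Ex0 : Ex P (fun w : T => 0 : R) = 0.
Proof.
rewrite /Ex. have -> : (fun w : T => 0 : R) = cst 0 by [].
by rewrite expectation_cst.
Qed.

Lemma Exsum (I : Type) (s : seq I) (F : I -> T -> R) :
  (forall i, F i \in Lfun P 1%:E) ->
  Ex P (fun w => \sum_(i <- s) F i w) = \sum_(i <- s) Ex P (F i).
Proof.
move=> hF; elim: s => [|a s IH].
  under eq_fun do rewrite big_nil. by rewrite big_nil Ex0.
under eq_fun do rewrite big_cons. by rewrite big_cons ExD // ?IH //; exact: Lpsum.
Qed.


Lemma L2vec_mul m n (A : 'M[R]_(m, n)) (g : T -> 'cV[R]_n) :
  L2vec P g -> L2vec P (fun w => A *m g w).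
Proof.
move=> hg i.
have -> : (fun w => (A *m g w) i 0) = (fun w => \sum_j A i j * g w j 0).
  by apply/funext => w; rewrite mxE.
by apply: Lpsum => // j; apply: LpZ.
Qed.

Lemma L2vec_sum n (I : finType) (g : I -> T -> 'cV[R]_n) :
  (forall k, L2vec P (g k)) -> L2vec P (fun w => \sum_k g k w).
Proof.
move=> hg i.
have -> : (fun w => (\sum_k g k w) i 0) = (fun w => \sum_k g k w i 0).
  by apply/funext => w; rewrite summxE.
by apply: Lpsum => // k; apply: hg.
Qed.

Lemma L2vec_sub n (g h : T -> 'cV[R]_n) :
  L2vec P g -> L2vec P h -> L2vec P (fun w => g w - h w).
Proof.
move=> hg hh i.
have -> : (fun w => (g w - h w) i 0) = (fun w => g w i 0 + - h w i 0).
  by apply/funext => w; rewrite !mxE.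
by apply: LpD => //; apply: LpN.
Qed.

Lemma Emat_tr m n (g : T -> 'cV[R]_m) (h : T -> 'cV[R]_n) :
  Emat P g h = (Emat P h g)^T.
Proof.
apply/matrixP => i j; rewrite !mxE.
by congr Ex; apply/funext => w; rewrite mulrC.
Qed.

Lemma Emat_mull m n k (A : 'M[R]_(k, m)) (g : T -> 'cV[R]_m) (h : T -> 'cV[R]_n) :
  L2vec P g -> L2vec P h -> Emat P (fun w => A *m g w) h = A *m Emat P g h.
Proof.
move=> hg hh; apply/matrixP => i j; rewrite !mxE.
have -> : (fun w => (A *m g w) i 0 * h w j 0) =
          (fun w => \sum_l A i l * (g w l 0 * h w j 0)).
  apply/funext => w; rewrite mxE mulr_suml; apply: eq_bigr => l _.
  by rewrite mulrA.
rewrite Exsum; last by move=> l; apply: LpZ => //; apply: L2M.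
apply: eq_bigr => l _; rewrite ExZ ?mxE //; exact: L2M.
Qed.

Lemma Emat_suml m n (I : finType) (g : I -> T -> 'cV[R]_m) (h : T -> 'cV[R]_n) :
  (forall k, L2vec P (g k)) -> L2vec P h ->
  Emat P (fun w => \sum_k g k w) h = \sum_k Emat P (g k) h.
Proof.
move=> hg hh; apply/matrixP => i j; rewrite !mxE summxE.
have -> : (fun w => (\sum_k g k w) i 0 * h w j 0) =
          (fun w => \sum_k (g k w i 0 * h w j 0)).
  by apply/funext => w; rewrite summxE mulr_suml.
rewrite Exsum; last by move=> l; apply: L2M; [exact: hg | exact: hh].
by apply: eq_bigr => l _; rewrite mxE.
Qed.

Lemma Emat_subl m n (g1 g2 : T -> 'cV[R]_m) (h : T -> 'cV[R]_n) :
  L2vec P g1 -> L2vec P g2 -> L2vec P h ->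
  Emat P (fun w => g1 w - g2 w) h = Emat P g1 h - Emat P g2 h.
Proof.
move=> hg1 hg2 hh; apply/matrixP => i j; rewrite !mxE.
have -> : (fun w => (g1 w - g2 w) i 0 * h w j 0) =
          (fun w => g1 w i 0 * h w j 0 + - (g2 w i 0 * h w j 0)).
  by apply/funext => w; rewrite !mxE mulrBl.
rewrite ExD ?ExN //; try exact: L2M.
by apply: LpN; apply: L2M.
Qed.

Lemma Emat_mulr m n k (B : 'M[R]_(k, n)) (g : T -> 'cV[R]_m) (h : T -> 'cV[R]_n) :
  L2vec P g -> L2vec P h -> Emat P g (fun w => B *m h w) = Emat P g h *m B^T.
Proof.
move=> hg hh; rewrite Emat_tr Emat_mull // trmx_mul -Emat_tr //.
Qed.

Lemma Emat_sumr m n (I : finType) (g : T -> 'cV[R]_m) (h : I -> T -> 'cV[R]_n) :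
  L2vec P g -> (forall k, L2vec P (h k)) ->
  Emat P g (fun w => \sum_k h k w) = \sum_k Emat P g (h k).
Proof.
move=> hg hh; rewrite Emat_tr Emat_suml // linear_sum /=.
by apply: eq_bigr => k _; rewrite -Emat_tr.
Qed.

Lemma Emat_subr m n (g : T -> 'cV[R]_m) (h1 h2 : T -> 'cV[R]_n) :
  L2vec P g -> L2vec P h1 -> L2vec P h2 ->
  Emat P g (fun w => h1 w - h2 w) = Emat P g h1 - Emat P g h2.
Proof.
move=> hg hh1 hh2; rewrite Emat_tr Emat_subl // linearB /= -!Emat_tr //.
Qed.

Lemma mse_tr m (x z : T -> 'cV[R]_m) :
  L2vec P x -> L2vec P z ->
  mse P x z = \tr (Emat P (fun w => x w - z w) (fun w => x w - z w)).
Proof.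
move=> hx hz; rewrite /mse /mxtrace.
rewrite Exsum; last first.
  move=> i.
  have -> : (fun w => (x w i 0 - z w i 0) ^+ 2) =
            (fun w => (x w i 0 - z w i 0) * (x w i 0 - z w i 0)).
    by apply/funext => w; rewrite expr2.
  by apply: L2M; apply: LpD => //; apply: LpN.
apply: eq_bigr => i _; rewrite mxE; congr Ex; apply/funext => w.
by rewrite !mxE expr2.
Qed.


Lemma trB n (A B : 'M[R]_n) : \tr (A - B) = \tr A - \tr B.
Proof. exact: raddfB. Qed.

Lemma trsum n (I : finType) (F : I -> 'M[R]_n) : \tr (\sum_k F k) = \sum_k \tr (F k).
Proof. exact: raddf_sum. Qed.

Lemma mse_expand m n (I : finType) (x : T -> 'cV[R]_m) (v : I -> T -> 'cV[R]_n)
  (M : I -> 'M[R]_(m, n)) :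
  L2vec P x -> (forall k, L2vec P (v k)) ->
  (forall i j, i != j -> Emat P (v i) (v j) = 0) ->
  mse P x (fun w => \sum_k M k *m v k w) =
  \tr (Emat P x x) + \sum_k (\tr (M k *m Emat P (v k) (v k) *m (M k)^T)
                             - 2 * \tr (Emat P x (v k) *m (M k)^T)).
Proof.
move=> hx hv horth.
have hMv : forall k, L2vec P (fun w => M k *m v k w) by move=> k; apply: L2vec_mul.
have hz : L2vec P (fun w => \sum_k M k *m v k w) by apply: L2vec_sum.
rewrite mse_tr // Emat_subl //; last exact: L2vec_sub.
rewrite !Emat_subr //.
have Exz : Emat P x (fun w => \sum_k M k *m v k w) = \sum_k Emat P x (v k) *m (M k)^T.
  by rewrite Emat_sumr //; apply: eq_bigr => k _; rewrite Emat_mulr.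
have Ezz : Emat P (fun w => \sum_k M k *m v k w) (fun w => \sum_k M k *m v k w)
           = \sum_k M k *m Emat P (v k) (v k) *m (M k)^T.
  rewrite Emat_sumr //; apply: eq_bigr => l _.
  rewrite Emat_mulr // Emat_suml //; congr (_ *m _).
  rewrite (bigD1 l) //= big1 ?addr0; first by rewrite Emat_mull.
  by move=> k hk; rewrite Emat_mull // horth // mulmx0.
rewrite Ezz [Emat P (fun w => \sum_k M k *m v k w) x]Emat_tr Exz.
rewrite !trB mxtrace_tr !trsum.
rewrite -addrA; congr (_ + _).
rewrite opprB addrC -!sumrB; apply: eq_bigr => k _.
lra.
Qed.

End Analytic.
Section LA.
Context {R : realType}.

Lemma pinv_uniq m n (A : 'M[R]_(m, n)) (B C : 'M[R]_(n, m)) :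
  is_pinv A B -> is_pinv A C -> B = C.
Proof.
move=> [h1 [h2 [h3 h4]]] [c1 [c2 [c3 c4]]].
have AT1 : A^T = A^T *m (A *m C).
  by rewrite -c3 -trmx_mul c1.
have AT2 : A^T = (B *m A) *m A^T.
  by rewrite -h4 -trmx_mul mulmxA h1.
have eB : B = B *m A *m C.
  transitivity (B *m (A *m B)^T); first by rewrite h3 mulmxA h2.
  rewrite trmx_mul {1}AT1 !mulmxA -(mulmxA B B^T A^T) -trmx_mul h3.
  by rewrite mulmxA h2.
have eC : C = B *m A *m C.
  transitivity ((C *m A)^T *m C); first by rewrite c4 c2.
  rewrite trmx_mul AT2 -!mulmxA (mulmxA A^T C^T C) -trmx_mul c4 c2.
  by rewrite mulmxA.
by rewrite eB -eC.
Qed.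


Lemma pinv_sym n (S D : 'M[R]_n) : S^T = S -> is_pinv S D -> D^T = D.
Proof.
move=> hS hp; have hp' := hp; case: hp' => [h1 [h2 [h3 h4]]].
apply: (@pinv_uniq n n S (D^T) D _ hp).
split; first by have := congr1 trmx h1; rewrite !trmx_mul hS mulmxA.
split; first by have := congr1 trmx h2; rewrite !trmx_mul hS mulmxA.
split.
  have e : S *m D^T = D *m S by rewrite -{1}hS -trmx_mul h4.
  by rewrite e.
have e : D^T *m S = S *m D by rewrite -{1}hS -trmx_mul h3.
by rewrite e.
Qed.

Lemma rdiag_diag m (f : nat -> R) : rdiag m m f = diag_mx (\row_(i < m) f i).
Proof.
apply/matrixP => i j; rewrite !mxE.
case: (eqVneq i j) => [->|hij]; first by rewrite eqxx.
by have -> : (i == j :> nat) = false by apply/negbTE.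
Qed.

Lemma rdiag_trunc m n (s : nat -> R) eta :
  rdiag m n (fun i => if (i < eta)%N then s i else 0) =
  rdiag m m (fun i => if (i < eta)%N then 1 else 0) *m rdiag m n s.
Proof.
rewrite rdiag_diag mul_diag_mx; apply/matrixP => i j; rewrite !mxE.
by case: ifP; case: ifP; rewrite ?mul1r ?mul0r.
Qed.

Lemma sum_delta n (i : nat) (a b : R) :
  \sum_(j < n) (if i == j :> nat then a else 0) * (if i == j :> nat then b else 0) =
  if (i < n)%N then a * b else 0.
Proof.
case: ltnP => h.
  rewrite (bigD1 (Ordinal h)) //= eqxx big1 ?addr0 // => j hj.
  have -> : (i == j :> nat) = false.
    apply/negbTE; apply: contra hj => /eqP e; apply/eqP; apply: val_inj => /=.
    by rewrite e.
  by rewrite mul0r.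
rewrite big1 // => j _.
have -> : (i == j :> nat) = false.
  by apply/negbTE; apply: contraTN (ltn_ord j) => /eqP <-; rewrite -leqNgt.
by rewrite mul0r.
Qed.

Lemma tr_trunc m n (s : nat -> R) eta : (eta <= minn m n)%N ->
  \tr (rdiag m n (fun i => if (i < eta)%N then s i else 0) *m (rdiag m n s)^T) =
  \sum_(0 <= j < eta) s j ^+ 2.
Proof.
move=> he; rewrite leq_min in he; case/andP: he => hm hn.
rewrite /mxtrace.
have -> : \sum_(i < m) (rdiag m n (fun i => if (i < eta)%N then s i else 0) *m
            (rdiag m n s)^T) i i = \sum_(i < m) (if (i < eta)%N then s i ^+ 2 else 0).
  apply: eq_bigr => i _; rewrite mxE.
  under eq_bigr do rewrite !mxE.
  rewrite sum_delta; case: (ltnP i eta) => hi; first by rewrite (leq_trans hi hn) expr2.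
  by case: ifP; rewrite ?mul0r.
rewrite -(big_mkord xpredT (fun i => if (i < eta)%N then s i ^+ 2 else 0)).
by rewrite (big_nat_widen 0 eta m) // [RHS]big_mkcond.
Qed.


Lemma rdiag_sym m (f : nat -> R) : (rdiag m m f)^T = rdiag m m f.
Proof. by apply/matrixP => i j; rewrite !mxE eq_sym; case: eqVneq => // ->. Qed.

Lemma rdiag_idem m eta :
  rdiag m m (fun i => if (i < eta)%N then 1 else 0) *m
  rdiag m m (fun i => if (i < eta)%N then 1 else 0) =
  rdiag m m (fun i => if (i < eta)%N then (1 : R) else 0).
Proof.
rewrite {1}rdiag_diag mul_diag_mx; apply/matrixP => i j; rewrite !mxE.
by case: ifP; case: ifP; rewrite ?mul1r ?mul0r.
Qed.

Lemma fk m n (X : 'M[R]_(m, n)) (E S D : 'M[R]_n) (U : 'M[R]_m) (s : nat -> R)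
  (V : 'M[R]_n) (eta : nat) :
  (eta <= minn m n)%N -> is_psd_sqrt S E -> is_pinv S D -> is_svd (X *m D) U s V ->
  \tr (svd_trunc U s V eta *m D *m E *m (svd_trunc U s V eta *m D)^T)
   - 2 * \tr (X *m (svd_trunc U s V eta *m D)^T) = - \sum_(0 <= j < eta) s j ^+ 2.
Proof.
move=> heta [hST [_ hSS]] hp [hU [hV [_ [_ hA]]]].
have hDT := @pinv_sym n S D hST hp; case: hp => h1 [h2 [h3 h4]].
set A := X *m D in hA *.
set G := svd_trunc U s V eta.
set J := rdiag m m (fun i => if (i < eta)%N then (1 : R) else 0).
set W := U *m J *m U^T.
have hG : G = W *m A.
  rewrite hA /G /svd_trunc rdiag_trunc -/J /W -!mulmxA (mulmxA U^T U) hU mul1mx.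
  done.
have hSD : S *m D = D *m S by rewrite -h3 trmx_mul hDT hST.
have hQ : D *m E *m D^T = D *m S.
  by rewrite -hSS hDT -!mulmxA hSD !mulmxA h2.
have hAQ : A *m (D *m S) = A.
  by rewrite /A -mulmxA -hSD (mulmxA D S D) h2.
have hWT : W^T = W by rewrite /W !trmx_mul trmxK rdiag_sym mulmxA.
have hWW : W *m W = W.
  by rewrite /W -!mulmxA (mulmxA U^T U) hU mul1mx (mulmxA J J) rdiag_idem.
have e1 : G *m D *m E *m (G *m D)^T = G *m G^T.
  rewrite trmx_mul (_ : G *m D *m E *m (D^T *m G^T) = G *m (D *m E *m D^T) *m G^T);
    last by rewrite !mulmxA.
  by rewrite hQ; congr (_ *m _); rewrite {1}hG -mulmxA hAQ -hG.
have e2 : X *m (G *m D)^T = A *m G^T.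
  by rewrite trmx_mul hDT mulmxA.
rewrite e1 e2.
have t1 : \tr (G *m G^T) = \tr (G *m A^T).
  by rewrite {2}hG trmx_mul hWT mulmxA mxtrace_mulC mulmxA {1}hG mulmxA hWW -hG.
have t2 : \tr (A *m G^T) = \tr (G *m A^T).
  by rewrite -mxtrace_tr trmx_mul trmxK.
have t3 : \tr (G *m A^T) = \sum_(0 <= j < eta) s j ^+ 2.
  rewrite hA /G /svd_trunc !trmx_mul trmxK -!mulmxA (mulmxA V^T V) hV mul1mx.
  by rewrite mxtrace_mulC -!mulmxA hU mulmx1 tr_trunc.
rewrite t1 t2 t3; lra.
Qed.

End LA.

Theorem corollary5 (d : measure_display) (T : measurableType d) (R : realType)
  (P : probability T R) (m n p : nat) (hp : (0 < p)%N)
  (x : T -> 'cV[R]_m) (y : T -> 'cV[R]_n) (v : 'I_p -> T -> 'cV[R]_n)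
  (eta : 'I_p -> nat)
  (S Sd : 'I_p -> 'M[R]_n) (U : 'I_p -> 'M[R]_m) (s : 'I_p -> nat -> R)
  (V : 'I_p -> 'M[R]_n) :
  L2vec P x -> zero_mean P x ->
  L2vec P y -> zero_mean P y ->
  v (Ordinal hp) = y ->
  (forall k, L2vec P (v k)) -> (forall k, zero_mean P (v k)) ->
  (forall i j, i != j -> Emat P (v i) (v j) = 0) ->
  (\sum_(k < p) eta k <= minn m n)%N ->
  (forall k, is_psd_sqrt (S k) (Emat P (v k) (v k))) ->
  (forall k, is_pinv (S k) (Sd k)) ->
  (forall k, is_svd (Emat P x (v k) *m Sd k) (U k) (s k) (V k)) ->
  let G k := svd_trunc (U k) (s k) (V k) (eta k) in
  let k1 := Ordinal hp in
  mse P x (fun w => \sum_(k < p) G k *m Sd k *m v k w)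
  = mse P x (fun w => G k1 *m Sd k1 *m y w)
    - \sum_(k < p | k != k1) \sum_(0 <= j < eta k) s k j ^+ 2.
Proof.
move=> hx _ hy _ hv1 hv _ horth hsum hpsd hpinv hsvd G k1.
have hfk : forall k, \tr (G k *m Sd k *m Emat P (v k) (v k) *m (G k *m Sd k)^T)
   - 2 * \tr (Emat P x (v k) *m (G k *m Sd k)^T) = - \sum_(0 <= j < eta k) s k j ^+ 2.
  move=> k; apply: fk => //.
  apply: leq_trans hsum; rewrite (bigD1 k) //=; exact: leq_addr.
have E1 : mse P x (fun w => \sum_(k < p) G k *m Sd k *m v k w) =
  \tr (Emat P x x) + \sum_k (\tr (G k *m Sd k *m Emat P (v k) (v k) *m (G k *m Sd k)^T)
                             - 2 * \tr (Emat P x (v k) *m (G k *m Sd k)^T)).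
  exact: (@mse_expand _ _ _ P m n _ x v (fun k => G k *m Sd k)).
have E2 : mse P x (fun w => G k1 *m Sd k1 *m y w) =
  \tr (Emat P x x) + \sum_(k < 1) (\tr (G k1 *m Sd k1 *m Emat P (v k1) (v k1) *m (G k1 *m Sd k1)^T)
                             - 2 * \tr (Emat P x (v k1) *m (G k1 *m Sd k1)^T)).
  rewrite -hv1.
  have -> : (fun w => G k1 *m Sd k1 *m v (Ordinal hp) w) =
            (fun w => \sum_(k < 1) (fun _ => G k1 *m Sd k1) k *m (fun _ => v k1) k w).
    by apply/funext => w; rewrite big_ord1.
  apply: (@mse_expand _ _ _ P m n _ x (fun _ => v k1) (fun _ => G k1 *m Sd k1)) => //.
  by move=> i j; rewrite !ord1 eqxx.
rewrite E1 E2 big_ord1.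
under eq_bigr do rewrite hfk.
rewrite hfk (bigD1 k1) //= sumrN.
lra.
Qed.
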